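(* Let $\mathcal{G}$ be a MAG and let $H,H'$ be two heads whose maximal vertex is $i$. If $H\to^KH'$ and $H\to^LH'$, then $H\to^{K\cap L}H'$.
   Context: A MAG is an acyclic directed mixed graph (directed and bidirected edges, no directed cycles) with $\mathrm{sib}(v)\cap\mathrm{an}(v)=\emptyset$ for all $v$ and in which every nonadjacent pair is m-separated by some set. Vertices are numbered in a topological order (ancestors have smaller labels). $\mathrm{barren}_{\mathcal{G}'}(W)=\{w\in W:\mathrm{de}_{\mathcal{G}'}(w)\cap W=\{w\}\}$; a nonempty $H$ is a head if $\mathrm{barren}(H)=H$ and $H$ lies in one district (bidirected-connected component) of $\mathcal{G}_{\mathrm{an}(H)}$. For a head $H$ with maximal vertex $i$ and $\emptyset\ne K\subseteq H\setminus\{i\}$, write $H\to^KH'$ if $H'=\mathrm{barren}_{\mathcal{G}'}(\mathrm{dis}_{\mathcal{G}'}(i))$, where $\mathcal{G}'=\mathcal{G}_{\mathrm{an}(H)\setminus K}$ and $\mathrm{dis}_{\mathcal{G}'}(i)$ is the district of $i$ in $\mathcal{G}'$. *)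

(* Defs.v *)
(* Mixed graphs on vertex set 'I_n (labels = topological order). *)
From mathcomp Require Import all_boot.
Set Implicit Arguments. Unset Strict Implicit. Unset Printing Implicit Defensive.

Section MixedGraph.
Variable n : nat.
(* D a b : directed edge a -> b ;  B a b : bidirected edge a <-> b *)
Variables (D B : rel 'I_n).

(* a is an ancestor of b in G (reflexive: every vertex is its own ancestor) *)
Definition anc (a b : 'I_n) : bool := connect D a b.

Definition an (S : {set 'I_n}) : {set 'I_n} :=
  [set a | [exists b in S, anc a b]].

Definition Drel (A : {set 'I_n}) : rel 'I_n :=
  [rel x y | [&& x \in A, y \in A & D x y]].

Definition Brel (A : {set 'I_n}) : rel 'I_n :=
  [rel x y | [&& x \in A, y \in A & B x y || B y x]].

Definition de (A : {set 'I_n}) (w : 'I_n) : {set 'I_n} :=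
  [set v | (w \in A) && connect (Drel A) w v].

Definition barren (A W : {set 'I_n}) : {set 'I_n} :=
  [set w in W | de A w :&: W == [set w]].

Definition dis (A : {set 'I_n}) (i : 'I_n) : {set 'I_n} :=
  [set v | (i \in A) && connect (Brel A) i v].

Definition is_head (H : {set 'I_n}) : bool :=
  [&& H != set0, barren setT H == H &
      [exists v, (v \in an H) && (H \subset dis (an H) v)]].

Definition is_max (H : {set 'I_n}) (i : 'I_n) : bool :=
  (i \in H) && [forall v in H, (v <= i)%N].

Definition trans (H K H' : {set 'I_n}) : Prop :=
  exists i, [/\ is_max H i, K != set0, K \subset H :\ i &
    H' = barren (an H :\: K) (dis (an H :\: K) i)].

Definition adj (a b : 'I_n) : bool := [|| D a b, D b a, B a b | B b a].

(* arrowhead at v on the edge between u and v *)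
Definition arrow_at (u v : 'I_n) : bool := [|| D u v, B u v | B v u].

Definition mconnecting (Z : {set 'I_n}) (x y : 'I_n) (p : seq 'I_n) : bool :=
  let s := x :: p in
  [&& uniq s, path adj x p, last x p == y &
    [forall k : 'I_(size s),
      (0 < k < (size s).-1)%N ==>
      (let u := nth x s k.-1 in let v := nth x s k in let w := nth x s k.+1 in
       if arrow_at u v && arrow_at w v
       then v \in an Z
       else v \notin Z)]].

Definition msep (Z : {set 'I_n}) (x y : 'I_n) : Prop :=
  [/\ x \notin Z, y \notin Z & forall p : seq 'I_n, ~~ mconnecting Z x y p].

Definition is_MAG : Prop :=
  [/\ (forall a b, D a b -> (a < b)%N),           (* topological order; implies acyclic *)
      (forall a b, B a b = B b a),
      (forall a, ~~ B a a),
      (forall a b, B a b -> ~~ anc a b)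
    & (forall x y, x != y -> ~~ adj x y -> exists Z, msep Z x y)].

End MixedGraph.

(* Main.v *)
Require Import Defs.
From mathcomp Require Import all_boot.
Set Implicit Arguments. Unset Strict Implicit. Unset Printing Implicit Defensive.

Lemma conn_fwd (T : finType) (e : rel T) (P : pred T) x :
  P x -> (forall a b, connect e x a -> P a -> e a b -> P b) ->
  forall y, connect e x y -> P y.
Proof.
move=> Px step y /connectP [p pth yE]; subst y.
elim/last_ind: p pth => [|p z IH] //=.
rewrite rcons_path last_rcons => /andP [pth ezl].
apply: (step (last x p)) => //; last exact: IH.
by apply/connectP; exists p.
Qed.

Lemma conn_bwd (T : finType) (e e' : rel T) (P : pred T) x y :
  P y -> (forall a b, e a b -> P b -> e' a b && P a) -> connect e x y -> connect e' x y.
Proof.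
move=> Py step /connectP [p pth yE]; subst y.
suff: connect e' x (last x p) && P x by case/andP.
elim: p x pth Py => [|z p IH] x /=; first by move=> _ ->; rewrite connect0.
case/andP => exz pth Py.
case/andP: (IH z pth Py) => cz Pz.
case/andP: (step _ _ exz Pz) => e'xz Px.
by rewrite Px (connect_trans (connect1 e'xz) cz).
Qed.

Lemma leq_conn n (D : rel 'I_n) : (forall a b, D a b -> (a < b)%N) ->
  forall a b, connect D a b -> (a <= b)%N.
Proof.
move=> topo a b ab; apply: (@conn_fwd _ D (fun y => (a <= y)%N) a _ _ b ab) => //.
move=> u v _ /= au /topo uv; exact: leq_trans au (ltnW uv).
Qed.

Lemma Drel_conn n (D : rel 'I_n) (X : {set 'I_n}) a b : connect (Drel D X) a b -> connect D a b.
Proof.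
apply: connect_sub => u v /= /and3P [_ _ uv]; exact: connect1.
Qed.

Lemma dis_sub n (B : rel 'I_n) (X : {set 'I_n}) i : dis B X i \subset X.
Proof.
apply/subsetP => v; rewrite inE => /andP [iX iv].
apply: (@conn_fwd _ _ (fun y => y \in X) i _ _ v iv) => // u w _ _ /= /and3P [].
by [].
Qed.

Lemma barren_sub n (D : rel 'I_n) (X W : {set 'I_n}) : barren D X W \subset W.
Proof. by apply/subsetP => v; rewrite inE => /andP []. Qed.

Lemma reach_barren n (D : rel 'I_n) (X W : {set 'I_n}) (v : 'I_n) :
  (forall a b, D a b -> (a < b)%N) -> W \subset X -> v \in W ->
  exists2 h, h \in barren D X W & connect (Drel D X) v h.
Proof.
move=> topo WX vW.
pose S := [pred u | (u \in W) && connect (Drel D X) v u].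
have Sv : S v by rewrite /S /= vW connect0.
case: (arg_maxnP (fun u : 'I_n => nat_of_ord u) Sv) => u /andP [uW vu] umax.
exists u => //.
rewrite inE uW /=; apply/eqP/setP => x; rewrite !inE.
case: (eqVneq x u) => [->|xu].
  by rewrite uW connect0 (subsetP WX u uW).
apply/negP => /andP [/andP [_ ux] xW].
have Sx : S x by rewrite /S /= xW (connect_trans vu ux).
have h1 := umax x Sx.
have h2 := leq_conn topo (Drel_conn ux).
by move/eqP: xu; apply; apply: val_inj; apply/eqP; rewrite eqn_leq h2 andbT; exact: h1.
Qed.

Lemma notin_lem n (D : rel 'I_n) (A H H' Z : {set 'I_n}) x h' :
  (forall h y, h \in H -> y \in A -> connect D h y -> y = h) ->
  Z \subset H -> (forall h, h \in H' -> (h \in A) && (h \notin Z)) ->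
  h' \in H' -> connect D x h' -> x \notin Z.
Proof.
move=> sink ZH HH' hH' xh; apply/negP => xZ.
case/andP: (HH' h' hH') => hA hZ.
have := sink x h' (subsetP ZH x xZ) hA xh.
by move=> E; rewrite E xZ in hZ.
Qed.

Lemma H'_prop n (D B : rel 'I_n) (A H' L : {set 'I_n}) i :
  H' = barren D (A :\: L) (dis B (A :\: L) i) ->
  forall h, h \in H' -> (h \in A) && (h \notin L).
Proof.
move=> -> h /(subsetP (barren_sub _ _ _)) /(subsetP (dis_sub _ _ _)).
by rewrite inE andbC.
Qed.

Lemma DK_noL n (D B : rel 'I_n) (A H H' K L : {set 'I_n}) i :
  (forall a b, D a b -> (a < b)%N) ->
  (forall h y, h \in H -> y \in A -> connect D h y -> y = h) ->
  L \subset H ->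
  H' = barren D (A :\: K) (dis B (A :\: K) i) ->
  H' = barren D (A :\: L) (dis B (A :\: L) i) ->
  forall v, v \in dis B (A :\: K) i -> v \notin L.
Proof.
move=> topo sink LH E1 E2 v vD.
have [h hb vh] := reach_barren topo (dis_sub _ _ _) vD.
rewrite -E1 in hb.
exact: (notin_lem sink LH (H'_prop E2) hb (Drel_conn vh)).
Qed.

Lemma DK_DL n (D B : rel 'I_n) (A H H' K L : {set 'I_n}) i :
  (forall a b, D a b -> (a < b)%N) ->
  (forall h y, h \in H -> y \in A -> connect D h y -> y = h) ->
  L \subset H -> i \in A -> i \notin K -> i \notin L ->
  H' = barren D (A :\: K) (dis B (A :\: K) i) ->
  H' = barren D (A :\: L) (dis B (A :\: L) i) ->
  dis B (A :\: K) i \subset dis B (A :\: L) i.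
Proof.
move=> topo sink LH iA iK iL E1 E2.
have noL := DK_noL topo sink LH E1 E2.
apply/subsetP => v; rewrite [v \in dis _ _ _]inE => /andP [iAK iv].
apply: (@conn_fwd _ _ (fun y => y \in dis B (A :\: L) i) i _ _ v iv).
  by rewrite /= inE !inE iL iA connect0.
move=> a b ia /= aL /and3P [aAK bAK Bab].
have bD : b \in dis B (A :\: K) i.
  rewrite inE; apply/andP; split => //; apply: (connect_trans ia); apply: connect1.
  by rewrite /Brel /= aAK bAK Bab.
have aD : a \in dis B (A :\: K) i by rewrite inE iAK ia.
move: aL; rewrite inE => /andP [iAL ia'].
rewrite inE iAL /=; apply: (connect_trans ia'); apply: connect1.
move: aAK bAK; rewrite !inE => /andP [_ aA] /andP [_ bA].
by rewrite /Brel /= !inE (noL _ aD) (noL _ bD) aA bA Bab.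
Qed.

Lemma Brel_intro n (B : rel 'I_n) (X : {set 'I_n}) a b :
  a \in X -> b \in X -> B a b || B b a -> Brel B X a b.
Proof. by move=> aX bX Bab; rewrite /Brel /= aX bX Bab. Qed.

Lemma dis_step n (B : rel 'I_n) (X : {set 'I_n}) i a b :
  a \in dis B X i -> Brel B X a b -> b \in dis B X i.
Proof.
rewrite !inE => /andP [iX ia] ab; rewrite iX /=.
exact: connect_trans ia (connect1 ab).
Qed.

Lemma DM_eq n (D B : rel 'I_n) (A H H' K L : {set 'I_n}) i :
  (forall a b, D a b -> (a < b)%N) ->
  (forall h y, h \in H -> y \in A -> connect D h y -> y = h) ->
  K \subset H -> L \subset H -> i \in A -> i \notin K -> i \notin L ->
  H' = barren D (A :\: K) (dis B (A :\: K) i) ->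
  H' = barren D (A :\: L) (dis B (A :\: L) i) ->
  dis B (A :\: (K :&: L)) i = dis B (A :\: K) i.
Proof.
move=> topo sink KH LH iA iK iL E1 E2.
have KL := DK_DL topo sink LH iA iK iL E1 E2.
have LK := DK_DL topo sink KH iA iL iK E2 E1.
have sKM : A :\: K \subset A :\: (K :&: L) by apply: setDS; apply: subsetIl.
apply/eqP; rewrite eqEsubset; apply/andP; split; apply/subsetP => v;
  rewrite [v \in dis _ _ _]inE => /andP [iX iv].
- apply: (@conn_fwd _ _ (fun y => y \in dis B (A :\: K) i) i _ _ v iv).
    by rewrite /= inE !inE iK iA connect0.
  move=> a b _ /= aD /and3P [aM bM Bab].
  case bK: (b \in K).
    have bL : b \notin L by move: bM; rewrite !inE bK /= => /andP [].
    have aDL := subsetP KL a aD.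
    have aAL := subsetP (dis_sub _ _ _) a aDL.
    have bA : b \in A by move: bM; rewrite !inE => /andP [].
    have bDL : b \in dis B (A :\: L) i.
      by apply: (dis_step aDL); apply: Brel_intro => //; rewrite inE bL bA.
    have := subsetP (dis_sub _ _ _) b (subsetP LK b bDL).
    by rewrite inE bK.
  apply: (dis_step aD); apply: Brel_intro => //.
    exact: subsetP (dis_sub _ _ _) a aD.
  by move: bM; rewrite !inE bK => /andP [].
- apply: (@conn_fwd _ _ (fun y => y \in dis B (A :\: (K :&: L)) i) i _ _ v iv).
    by rewrite /= inE (subsetP sKM i iX) connect0.
  move=> a b _ /= aD /and3P [aK bK Bab].
  apply: (dis_step aD); apply: Brel_intro => //.
  + exact: subsetP sKM a aK.
  + exact: subsetP sKM b bK.
Qed.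

Lemma barren_eq n (D B : rel 'I_n) (A H H' K M : {set 'I_n}) i :
  (forall a b, D a b -> (a < b)%N) ->
  (forall h y, h \in H -> y \in A -> connect D h y -> y = h) ->
  K \subset H -> A :\: K \subset A :\: M -> i \in A -> i \notin K ->
  H' = barren D (A :\: K) (dis B (A :\: K) i) ->
  barren D (A :\: M) (dis B (A :\: K) i) = H'.
Proof.
move=> topo sink KH sKM iA iK E1.
set W := dis B (A :\: K) i.
have WX : W \subset A :\: K by apply: dis_sub.
rewrite E1 /barren; apply: eq_finset => w /=.
case wW: (w \in W) => //=.
have wK := subsetP WX w wW.
have wM := subsetP sKM w wK.
suff -> : de D (A :\: M) w :&: W = de D (A :\: K) w :&: W by [].
apply/setP => x; rewrite !in_setI [x \in de _ _ _]inE [x \in de _ _ _]inE wK wM /=.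
case xW: (x \in W); last by rewrite !andbF.
rewrite !andbT; apply/idP/idP.
  apply: (@conn_bwd _ _ _ (fun u => [exists h in H', connect D u h])).
    have [h hb xh] := reach_barren topo WX xW.
    by apply/existsP; exists h; rewrite -E1 in hb; rewrite hb (Drel_conn xh).
  move=> a b /and3P [aM bM ab] /existsP [h /andP [hH bh]].
  have ah : connect D a h := connect_trans (connect1 ab) bh.
  have HP := H'_prop E1.
  have aK := notin_lem sink KH HP hH ah.
  have bK := notin_lem sink KH HP hH bh.
  move: aM bM; rewrite !inE => /andP [_ aA] /andP [_ bA].
  rewrite /Drel /= !inE aK bK aA bA ab /=.
  by apply/existsP; exists h; rewrite hH ah.
apply: connect_sub => a b /and3P [aK bK ab].
by apply: connect1; rewrite /Drel /= (subsetP sKM a aK) (subsetP sKM b bK) ab.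
Qed.

Lemma max_uniq n (H : {set 'I_n}) i j : is_max H i -> is_max H j -> i = j.
Proof.
move=> /andP [iH /forall_inP mi] /andP [jH /forall_inP mj].
apply: val_inj; apply/eqP; rewrite eqn_leq; apply/andP; split.
  exact: mj.
exact: mi.
Qed.

Theorem lemmaC1 (n : nat) (D B : rel 'I_n) (H H' K L : {set 'I_n}) (i : 'I_n) :
  is_MAG D B ->
  is_head D B H -> is_head D B H' ->
  is_max H i -> is_max H' i ->
  trans D B H K H' -> trans D B H L H' ->
  trans D B H (K :&: L) H'.
Proof.
move=> [topo Bsym Birr Banc _] hH _ mH _ [i1 [m1 K0 KHi E1]] [i2 [m2 L0 LHi E2]].
have ei1 := max_uniq m1 mH; have ei2 := max_uniq m2 mH; subst i1 i2.
case/and3P: hH => _ /eqP bar /existsP [v0 /andP [_ Hv0]].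
set A := an D H in E1 E2 Hv0 *.
have HA : H \subset A.
  apply/subsetP => h hH; rewrite inE; apply/existsP; exists h.
  by rewrite hH /anc connect0.
have DrelT : Drel D setT =2 D by move=> u w; rewrite /Drel /= !in_setT.
have sink : forall h y, h \in H -> y \in A -> connect D h y -> y = h.
  move=> h y hH; rewrite inE => /existsP [b /andP [bH yb]] hy.
  have hb : connect D h b := connect_trans hy yb.
  have hbar : h \in barren D setT H by rewrite bar.
  move: hbar; rewrite inE => /andP [_ /eqP E].
  have : b \in de D setT h :&: H.
    by rewrite in_setI bH andbT inE in_setT (eq_connect DrelT) hb.
  rewrite E inE => /eqP bh; subst b.
  apply: val_inj; apply/eqP; rewrite eqn_leq (leq_conn topo yb) /=.
  exact: (@leq_conn n D topo h y hy).
have iH : i \in H by case/andP: mH.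
have iA := subsetP HA i iH.
have KH : K \subset H := subset_trans KHi (subD1set H i).
have LH : L \subset H := subset_trans LHi (subD1set H i).
have iK : i \notin K by apply/negP => /(subsetP KHi); rewrite !inE eqxx.
have iL : i \notin L by apply/negP => /(subsetP LHi); rewrite !inE eqxx.
have sKM : A :\: K \subset A :\: (K :&: L) by apply: setDS; apply: subsetIl.
have EM : H' = barren D (A :\: (K :&: L)) (dis B (A :\: (K :&: L)) i).
  rewrite (DM_eq topo sink KH LH iA iK iL E1 E2).
  by rewrite (barren_eq topo sink KH sKM iA iK E1).
exists i; split => //; last first.
  exact: subset_trans (subsetIl K L) KHi.
apply/negP => /eqP M0.
rewrite M0 setD0 in EM.
case/set0Pn: K0 => k kK.
have kH := subsetP KH k kK.
have kA := subsetP HA k kH.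
have symB : symmetric (Brel B A).
  by move=> x y; rewrite /Brel /= andbCA orbC.
have kD : k \in dis B A i.
  rewrite [k \in dis _ _ _]inE iA /=.
  have := subsetP Hv0 i iH; have := subsetP Hv0 k kH.
  rewrite !inE => /andP [v0A v0k] /andP [_ v0i].
  apply: connect_trans v0k.
  by rewrite (sym_connect_sym symB).
have : k \in H'.
  rewrite EM [k \in barren _ _ _]inE kD /=; apply/eqP/setP => x; rewrite in_setI in_set1.
  case: (eqVneq x k) => [->|xk].
    by rewrite kD andbT [k \in de _ _ _]inE kA connect0.
  apply/negP => /andP [].
  rewrite [x \in de _ _ _]inE kA /= => kx xD.
  have xA := subsetP (dis_sub _ _ _) x xD.
  by move: xk; rewrite (sink k x kH xA (Drel_conn kx)) eqxx.
move/(H'_prop E1); rewrite kK.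
by case/andP.
Qed.
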